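(* Let $\phi_1,\dots,\phi_N\in\mathbb{R}^d$ (not all zero) and $\theta^*\in\mathbb{R}^d$; set $\pi_i^*=\sigma(\phi_i^\top\theta^* )$, and for $\theta\in\mathbb{R}^d$ set $\pi_i=\sigma(\phi_i^\top\theta)$ and $\mathcal{L}(\theta)=\frac1N\sum_{i=1}^N(\pi_i-\pi_i^* )^2$. Let $u(\theta)=\min_i\pi_i(1-\pi_i)$, $v=\min_i\pi_i^*(1-\pi_i^* )$, and $\lambda_\phi$ the smallest positive eigenvalue of $\frac1N\sum_i\phi_i\phi_i^\top$. Then for all $\theta\in\mathbb{R}^d$, $$\Big\|\frac{\partial\mathcal{L}(\theta)}{\partial\theta}\Big\|_2\ge 8\,u(\theta)\min\{u(\theta),v\}\sqrt{\lambda_\phi}\Big[\frac1N\sum_{i=1}^N(\pi_i-\pi_i^* )^2\Big]^{1/2}.$$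
   Context: $\sigma(z)=1/(1+e^{-z})$ is the sigmoid function. *)

(* Defs.v *)
From HB Require Import structures.
From mathcomp Require Import all_boot all_order all_algebra.
From mathcomp Require Import all_classical all_reals all_analysis.
Set Implicit Arguments. Unset Strict Implicit. Unset Printing Implicit Defensive.
Import Order.TTheory GRing.Theory Num.Theory.
Import numFieldNormedType.Exports.
Local Open Scope ring_scope.

Section Defs.
Variable R : realType.

Definition sigmoid (z : R) : R := 1 / (1 + expR (- z)).

Definition dotv (d : nat) (x y : 'cV[R]_d) : R := (x^T *m y) 0 0.

Definition norm2 (d : nat) (x : 'cV[R]_d) : R :=
  Num.sqrt (\sum_(j < d) x j 0 ^+ 2).

Definition sigpi (d N : nat) (phi : 'I_N -> 'cV[R]_d) (th : 'cV[R]_d) (i : 'I_N) : R :=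
  sigmoid (dotv (phi i) th).

Definition lossL (d N : nat) (phi : 'I_N -> 'cV[R]_d) (thstar th : 'cV[R]_d) : R :=
  N%:R^-1 * \sum_(i < N) (sigpi phi th i - sigpi phi thstar i) ^+ 2.

Definition gradv (d : nat) (f : 'cV[R]_d -> R) (th : 'cV[R]_d) : 'cV[R]_d :=
  \col_(j < d) derive f th (delta_mx j 0 : 'cV[R]_d).

(* u(theta) = min_i pi_i (1 - pi_i) ; min over a nonempty index set
   (the hypothesis "not all phi_i zero" forces N >= 1) *)
Definition minpi (d N : nat) (phi : 'I_N -> 'cV[R]_d) (th : 'cV[R]_d) : R :=
  \big[Num.min/1]_(i < N) (sigpi phi th i * (1 - sigpi phi th i)).

Definition gram (d N : nat) (phi : 'I_N -> 'cV[R]_d) : 'M[R]_d :=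
  N%:R^-1 *: \sum_(i < N) (phi i *m (phi i)^T).

End Defs.

(* Main.v *)
Require Import Defs.
From HB Require Import structures.
From mathcomp Require Import all_boot all_order all_algebra.
From mathcomp Require Import all_classical all_reals all_analysis.
Import Order.TTheory GRing.Theory Num.Theory.
Import numFieldNormedType.Exports.
Local Open Scope ring_scope.
From mathcomp Require Import ring lra.
From mathcomp Require Import complex spectral sesquilinear.
Set Implicit Arguments. Unset Strict Implicit.

Section Spec.
Local Open Scope sesquilinear_scope.
Variable R : rcfType.
Local Notation toC := (real_complex R).

Lemma conj_toC (x : R) : (toC x)^* = toC x.
Proof. by apply: conj_Creal; rewrite complex_real. Qed.

Lemma map_conj_toC m n (M : 'M[R]_(m, n)) : (map_mx toC M) ^ Num.conj = map_mx toC M.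
Proof. by apply/matrixP => i j; rewrite !mxE conj_toC. Qed.

Lemma toC_le (a b : R) : toC a <= toC b -> a <= b.
Proof. by rewrite lecE /= => /andP[]. Qed.

Lemma toCM (a b : R) : toC (a * b) = toC a * toC b.
Proof. exact: rmorphM. Qed.

Lemma quad_diag n (X : 'rV[R[i]]_n) (P : 'M[R[i]]_n) (e : 'rV[R[i]]_n) :
  (X *m (P^t* *m diag_mx e *m P) *m X^t*) 0 0 =
  \sum_k e 0 k * ((X *m P^t*) 0 k * ((X *m P^t*) 0 k)^*).
Proof.
have -> : X *m (P^t* *m diag_mx e *m P) *m X^t* =
   (X *m P^t*) *m diag_mx e *m (X *m P^t*)^t*.
  by rewrite trmx_mul map_mxM trmxCK !mulmxA.
rewrite mxE; apply: eq_bigr => k _.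
by rewrite mul_mx_diag !mxE mulrAC mulrC.
Qed.


Lemma spec_ineq n (G : 'M[R]_n) (lam : R) :
  G^T = G -> 0 < lam -> (forall a, 0 < a -> eigenvalue G a -> lam <= a) ->
  forall x : 'rV[R]_n, lam * (x *m G *m x^T) 0 0 <= (x *m G *m G *m x^T) 0 0.
Proof.
move=> Gsym lam0 hmin x.
pose A := map_mx toC G.
have Atc : A^t* = A.
  apply/matrixP => i j; rewrite !mxE conj_toC.
  by have := congr1 (fun M : 'M[R]_n => M i j) Gsym; rewrite mxE => ->.
have Aherm : A \is hermsymmx by apply/is_hermitianmxP; rewrite expr0 scale1r Atc.
have Anorm : A \is normalmx by apply: hermitian_normalmx.
set P := spectralmx A; set s := spectral_diag A.
have Punit : P \is unitarymx := spectral_unitarymx A.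
have AE : A = P^t* *m diag_mx s *m P.
  by rewrite -invmx_unitary //; exact/orthomx_spectralP.
have sreal k : s 0 k \is Num.real.
  by have /mxOverP := hermitian_spectral_diag_real Aherm; apply.
have PPt : P *m P^t* = 1%:M by apply/unitarymxP.
have PA : P *m A = diag_mx s *m P.
  by rewrite AE !mulmxA PPt mul1mx.
have key k : toC lam * s 0 k <= s 0 k * s 0 k.
  rewrite -(RRe_real (sreal k)); set r := complex.Re (s 0 k).
  rewrite -!rmorphM lecR.
  have [r0|r0] := lerP r 0.
    apply: (le_trans (y := 0)); first by rewrite pmulr_rle0.
    by rewrite -expr2 sqr_ge0.
  rewrite ler_pM2r //; apply: hmin => //.
  rewrite eigenvalue_root_char -(fmorph_root toC) map_char_poly.
  rewrite -/A /r.
  suff H : root (char_poly A) (s 0 k).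
    by move: H; congr (root _ _); exact: (esym (RRe_real (sreal k))).
  rewrite -eigenvalue_root_char. 
  apply/eigenvalueP; exists (row k P).
    by rewrite -row_mul PA mul_diag_mx; apply/rowP => j; rewrite !mxE.
  apply/eqP => /(congr1 (fun v : 'rV_n => v *m P^t*)); rewrite -row_mul PPt.
  rewrite mul0mx => /rowP /(_ k); rewrite !mxE eqxx /= => /eqP; by rewrite oner_eq0.
pose X := map_mx toC x.
have Xt : X^t* = map_mx toC x^T by apply/matrixP => i j; rewrite !mxE conj_toC.
have E1 : toC ((x *m G *m x^T) 0 0) = (X *m A *m X^t*) 0 0.
  by rewrite Xt -!map_mxM [in RHS]mxE.
have E2 : toC ((x *m G *m G *m x^T) 0 0) = (X *m (A *m A) *m X^t*) 0 0.
  by rewrite Xt mulmxA -!map_mxM [in RHS]mxE.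
have AA : A *m A = P^t* *m diag_mx (\row_j (s 0 j * s 0 j)) *m P.
  by rewrite {1}AE -!mulmxA PA [diag_mx s *m (diag_mx s *m P)]mulmxA mulmx_diag mulmxA.
apply: toC_le; rewrite toCM E1 E2 AA AE !quad_diag mulr_sumr.
apply: ler_sum => k _; rewrite mulrA; apply: ler_wpM2r; first exact: mul_conjC_ge0.
by rewrite [X in _ <= X]mxE; exact: key.
Qed.

End Spec.

Section P1.
Local Open Scope classical_set_scope.
Variable R : realType.

Lemma gram_sym d N (phi : 'I_N -> 'cV[R]_d) : (gram phi)^T = gram phi.
Proof.
rewrite /gram linearZ /= linear_sum /=; congr (_ *: _); apply: eq_bigr => i _.
by rewrite trmx_mul trmxK.
Qed.

Lemma row_in_gram d N (phi : 'I_N -> 'cV[R]_d) i : ((phi i)^T <= gram phi)%MS.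
Proof.
rewrite submxE; move: (mulmx_coker (gram phi)); move: (cokermx (gram phi)) => K GK.
have E : K^T *m gram phi *m K =
   N%:R^-1 *: \sum_l ((phi l)^T *m K)^T *m ((phi l)^T *m K).
  rewrite /gram -scalemxAr -scalemxAl mulmx_sumr mulmx_suml; congr (_ *: _).
  by apply: eq_bigr => l _; rewrite trmx_mul trmxK !mulmxA.
have N0 : (0 < N)%N by case: N phi i {K GK E} => [|n] _ [].
apply/eqP/matrixP => z j; rewrite ord1 [RHS]mxE.
have := congr1 (fun M : 'M[R]_d => M j j) E.
rewrite -mulmxA GK mulmx0 [LHS]mxE mxE summxE => /esym /eqP.
rewrite mulf_eq0 invr_eq0 pnatr_eq0 (negPf (lt0n_neq0 N0)) /= => /eqP.
have hge l : 0 <= (((phi l)^T *m K)^T *m ((phi l)^T *m K)) j j.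
  by rewrite mxE big_ord1 !mxE -expr2 sqr_ge0.
move=> /psumr_eq0P H; have /eqP := H (fun l _ => hge l) i isT.
by rewrite mxE big_ord1 !mxE mulf_eq0 orbb => /eqP.
Qed.


Local Open Scope classical_set_scope.
Local Notation sig := (@sigmoid R).

Lemma sig_gt0 z : 0 < sig z.
Proof. by rewrite /sigmoid div1r invr_gt0 addr_gt0 // expR_gt0. Qed.

Lemma one_sub_sig z : 1 - sig z = expR (- z) / (1 + expR (- z)).
Proof.
rewrite /sigmoid; have h : 1 + expR (- z) != 0 by rewrite gt_eqF // addr_gt0 // expR_gt0.
field; exact: h.
Qed.

Lemma sig_lt1 z : sig z < 1.
Proof. by rewrite -subr_gt0 one_sub_sig divr_gt0 // ?addr_gt0 // expR_gt0. Qed.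

Lemma sig_le a b : a <= b -> sig a <= sig b.
Proof.
move=> ab; rewrite /sigmoid !div1r lef_pV2 ?posrE ?addr_gt0 ?expR_gt0 //.
by rewrite lerD2l ler_expR lerN2.
Qed.

Lemma sig_deriv (x : R) : is_derive x (1:R) sig (sig x * (1 - sig x)).
Proof.
have -> : sig = fun z => (1 + expR (- z))^-1.
  by apply/funext => z; rewrite /sigmoid div1r.
have h : 1 + expR (- x) != 0 by rewrite gt_eqF // addr_gt0 // expR_gt0.
have D1 : is_derive x (1:R) (cst 1 + (expR \o -%R)) (0 + expR (- x) * -1).
  apply: is_deriveD; exact: (@is_derive1_comp R expR -%R x _ _ (is_derive_expR _) (is_deriveNid _ _)).
have D2 := @is_deriveV _ (cst 1 + (expR \o -%R)) x _ _ h D1.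
apply: (is_derive_eq D2).
rewrite [(cst 1 + _) x]/= /cst /comp [_ *: _]/GRing.scale /=.
rewrite (_ : ((fun=> 1) + (fun x0 : R => expR (- x0))) x = 1 + expR (- x)) //.
field; exact: h.
Qed.

Lemma quad_min (p s q : R) : p <= s -> s <= q ->
  Num.min (p * (1 - p)) (q * (1 - q)) <= s * (1 - s).
Proof.
move=> ps sq; rewrite ge_min; apply/orP.
case: (lerP (s + p) 1) => h; [left|right]; nra.
Qed.

Lemma sig_mvt z1 z2 : exists c, Num.min (sig z1 * (1 - sig z1)) (sig z2 * (1 - sig z2)) <= c
  /\ c <= 1/4 /\ sig z1 - sig z2 = c * (z1 - z2).
Proof.
wlog h : z1 z2 / z2 <= z1.
  move=> W; case: (lerP z2 z1) => h; first exact: W.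
  have [c [c1 [c2 c3]]] := W z2 z1 (ltW h).
  exists c; split; first by rewrite minC.
  split => //; rewrite -opprB c3 -mulrN opprB //.
have cont : {within `[z2, z1], continuous sig}.
  apply/continuous_subspaceT => r.
  apply/differentiable_continuous/derivable1_diffP.
  by case: (sig_deriv r).
have [c cin E] := MVT_segment h (fun x _ => sig_deriv x) cont.
exists (sig c * (1 - sig c)); split; last split; last exact: E.
  move: cin; rewrite in_itv /= => /andP[c1 c2].
  by rewrite minC; apply: quad_min; apply: sig_le.
have := sqr_ge0 (sig c - 1/2); rewrite expr2; nra.
Qed.


Lemma term_deriv (a b q : R) : is_derive (0:R) 1 (fun h => (sig (h * b + a) - q)^+2)
  (2 * (sig a - q) * (sig a * (1 - sig a) * b)).
Proof.
have L := is_deriveD (is_deriveM (is_derive_id (0:R) (1:R)) (is_derive_cst b (0:R) (1:R))) (is_derive_cst a (0:R) (1:R)).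
have C := is_derive1_comp (sig_deriv _) L.
have B := is_deriveB C (is_derive_cst q (0:R) (1:R)).
have X := is_deriveX 2 B.
have -> : (fun h => (sig (h * b + a) - q)^+2) = ((sig \o (id * cst b + cst a)) - cst q)^+2.
  by apply/funext => h.
apply: (is_derive_eq X).
have E0 : (id * cst b + cst a) (0:R) = a.
  by change (0 * b + a = a); rewrite mul0r add0r.
have E1 : (sig \o (id * cst b + cst a) - cst q) (0:R) = sig a - q.
  by change (sig ((id * cst b + cst a) (0:R)) - q = sig a - q); rewrite E0.
rewrite /= /GRing.scale /= E1 E0 expr1; ring.
Qed.

Lemma derive_line d (f : 'cV[R]_d -> R) a v :
  derive f a v = derive1 (fun h => f (h *: v + a)) 0.
Proof.
rewrite /derive1 /derive /= scale0r add0r.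
have -> : (fun h : R => h^-1 *: (f ((h + 0) *: v + a) - f a)) =
   (fun h : R => h^-1 *: (f (h *: v + a) - f a)).
  by apply/funext => h; rewrite addr0.
by [].
Qed.

Lemma dotv_line d (p e t : 'cV[R]_d) h : dotv p (h *: e + t) = h * dotv p e + dotv p t.
Proof. by rewrite /dotv mulmxDr -scalemxAr !mxE. Qed.

Lemma dotv_delta d (p : 'cV[R]_d) j : dotv p (delta_mx j 0) = p j 0.
Proof.
rewrite /dotv mxE (bigD1 j) //= !mxE !eqxx mulr1 big1 ?addr0 // => k /negPf kj.
by rewrite !mxE kj mulr0.
Qed.

Lemma grad_entry d N (phi : 'I_N -> 'cV[R]_d) thstar th j :
 (gradv (lossL phi thstar) th) j 0 = N%:R^-1 * \sum_i (2 * (sigpi phi th i - sigpi phi thstar i)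
    * (sigpi phi th i * (1 - sigpi phi th i) * phi i j 0)).
Proof.
rewrite /gradv mxE derive_line derive1E.
have D := is_deriveZ (N%:R^-1) (is_derive_sum (fun i => term_deriv (dotv (phi i) th) (phi i j 0) (sigpi phi thstar i))).
have -> : (fun h => lossL phi thstar (h *: delta_mx j 0 + th)) =
    N%:R^-1 *: \sum_i (fun h => (sig (h * phi i j 0 + dotv (phi i) th) - sigpi phi thstar i)^+2).
  apply/funext => h; rewrite /lossL fct_sumE /= /GRing.scale /=; congr (_ * _).
  by apply: eq_bigr => i _; rewrite /sigpi dotv_line dotv_delta.
by case: D => _ ->.
Qed.
End P1.

Section P4.
Variable R : realType.

Lemma CS N (x y : 'I_N -> R) :
  (\sum_i x i * y i) ^+ 2 <= (\sum_i x i ^+ 2) * (\sum_i y i ^+ 2).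
Proof.
set XY := \sum_i _; set X2 := \sum_i _; set Y2 := \sum_i _.
have Y20 : 0 <= Y2 by apply: sumr_ge0 => i _; exact: sqr_ge0.
have X20 : 0 <= X2 by apply: sumr_ge0 => i _; exact: sqr_ge0.
case: (eqVneq Y2 0) => [Y2e|Y2n].
  have yz i : y i = 0.
    have /eqP := @psumr_eq0P _ _ _ _ (fun l _ => sqr_ge0 (y l)) Y2e i isT.
    by rewrite sqrf_eq0 => /eqP.
  rewrite /XY big1 ?expr0n ?mulr_ge0 // => i _; by rewrite yz mulr0.
have Y2p : 0 < Y2 by rewrite lt_def Y2n.
set t := XY / Y2.
have E : \sum_i (x i - t * y i) ^+ 2 = X2 + (- (2 * t)) * XY + t ^+ 2 * Y2.
  rewrite (eq_bigr (fun i => x i ^+ 2 + (- (2 * t)) * (x i * y i) + t ^+ 2 * y i ^+ 2)); last by move=> i _; ring.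
  by rewrite !big_split /= -!mulr_sumr.
have : 0 <= \sum_i (x i - t * y i) ^+ 2 by apply: sumr_ge0 => i _; exact: sqr_ge0.
rewrite E /t => H.
have : 0 <= Y2 * (X2 + - (2 * (XY / Y2)) * XY + (XY / Y2) ^+ 2 * Y2) by rewrite mulr_ge0.
have -> : Y2 * (X2 + - (2 * (XY / Y2)) * XY + (XY / Y2) ^+ 2 * Y2) = X2 * Y2 - XY ^+ 2.
  by field; rewrite Y2n.
by rewrite subr_ge0.
Qed.

Lemma bigmin_seq (I : eqType) (r : seq I) (f : I -> R) x i :
  i \in r -> \big[Num.min/x]_(k <- r) f k <= f i.
Proof.
elim: r => // k r IH; rewrite inE big_cons => /orP[/eqP->|/IH h].
  by rewrite ge_min lexx.
by rewrite ge_min h orbT.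
Qed.

Lemma minpi_le d N (phi : 'I_N -> 'cV[R]_d) th i :
  minpi phi th <= sigpi phi th i * (1 - sigpi phi th i).
Proof. by rewrite /minpi; apply: bigmin_seq; exact: mem_index_enum. Qed.

Lemma minpi_ge0 d N (phi : 'I_N -> 'cV[R]_d) th : 0 <= minpi phi th.
Proof.
rewrite /minpi; apply: (big_ind (fun x : R => 0 <= x)) => //; first by move=> a b a0 b0; rewrite le_min a0 b0.
move=> i _; apply: mulr_ge0; first exact/ltW/sig_gt0.
by rewrite subr_ge0; exact/ltW/sig_lt1.
Qed.

Lemma quad_gram d N (phi : 'I_N -> 'cV[R]_d) (W : 'rV[R]_d) (Y : 'cV[R]_d) :
  (W *m gram phi *m Y) 0 0 = N%:R^-1 * \sum_l (W *m phi l) 0 0 * ((phi l)^T *m Y) 0 0.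
Proof.
rewrite /gram -scalemxAr -scalemxAl mxE mulmx_sumr mulmx_suml summxE; congr (_ * _).
by apply: eq_bigr => l _; rewrite !mulmxA -(mulmxA (W *m phi l)) mxE big_ord1.
Qed.


Lemma final_arith (Ni lam u m S T A2 E2 PP PA WGW GG : R) :
  0 < Ni -> 0 < lam -> 0 <= u -> 0 <= m -> m <= 1/4 ->
  S = Ni * PA -> PA ^+ 2 <= PP * A2 -> 0 <= PP -> WGW = Ni * PP -> lam * WGW <= GG ->
  2 * Ni * u * T <= S -> m * A2 <= T -> 4 * E2 <= T -> 0 <= A2 -> 0 <= E2 ->
  T ^+ 2 <= E2 * A2 ->
  8 * u * m * Num.sqrt lam * Num.sqrt (Ni * E2) <= Num.sqrt GG.
Proof.
move=> Ni0 lam0 u0 m0 m14 SE CSi PP0 WE spec ST mT eT A20 E20 CS2.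
have GG0 : 0 <= GG by apply: le_trans spec; rewrite WE !mulr_ge0 // ltW.
have key : 16 * Ni * lam * u ^+ 2 * m * E2 <= GG.
  case: (eqVneq A2 0) => A2e.
    have T0 : T = 0.
      apply/eqP; rewrite -sqrf_eq0 eq_le sqr_ge0 andbT.
      by move: CS2; rewrite A2e mulr0.
    have -> : E2 = 0 by lra.
    by rewrite mulr0.
  have A2p : 0 < A2 by rewrite lt_def A2e.
  have T0 : 0 <= T by lra.
  have h1 : lam * S ^+ 2 <= Ni * A2 * GG.
    rewrite SE exprMn.
    apply: (le_trans (y := lam * (Ni ^+ 2 * (PP * A2)))).
      by rewrite ler_pM2l // ler_pM2l // exprn_gt0.
    have -> : lam * (Ni ^+ 2 * (PP * A2)) = Ni * A2 * (lam * WGW) by rewrite WE; ring.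
    by rewrite ler_pM2l // mulr_gt0.
  have h2 : 16 * Ni ^+ 2 * u ^+ 2 * m * E2 * A2 <= S ^+ 2.
    have a1 : (2 * Ni * u * T) ^+ 2 <= S ^+ 2.
      rewrite ler_sqr ?nnegrE //; last by apply: le_trans ST; rewrite !mulr_ge0 // ltW.
      by rewrite !mulr_ge0 // ltW.
    apply: le_trans a1.
    have a2 : (4 * E2) * (m * A2) <= T * T by apply: ler_pM => //; rewrite ?mulr_ge0.
    have -> : (2 * Ni * u * T) ^+ 2 = 4 * Ni ^+ 2 * u ^+ 2 * (T * T) by ring.
    have -> : 16 * Ni ^+ 2 * u ^+ 2 * m * E2 * A2 = 4 * Ni ^+ 2 * u ^+ 2 * ((4 * E2) * (m * A2)) by ring.
    by rewrite ler_wpM2l // !mulr_ge0 // ?exprn_ge0 // ltW.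
  have h3 : Ni * A2 * (16 * Ni * lam * u ^+ 2 * m * E2) <= Ni * A2 * GG.
    apply: le_trans h1.
    have -> : Ni * A2 * (16 * Ni * lam * u ^+ 2 * m * E2) = lam * (16 * Ni ^+ 2 * u ^+ 2 * m * E2 * A2) by ring.
    by rewrite ler_pM2l.
  by rewrite ler_pM2l ?mulr_gt0 // in h3.
have L0 : 0 <= 8 * u * m by rewrite !mulr_ge0.
rewrite -[8 * u * m](@ger0_norm _ (8 * u * m)) // -sqrtr_sqr -!sqrtrM ?mulr_ge0 ?sqr_ge0 ?sqrtr_ge0 //; last by rewrite ltW.
apply: ler_wsqrtr.
apply: le_trans key.
have -> : (8 * u * m) ^+ 2 * lam * (Ni * E2) = (64 * m) * (Ni * lam * u ^+ 2 * m * E2) by ring.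
have -> : 16 * Ni * lam * u ^+ 2 * m * E2 = 16 * (Ni * lam * u ^+ 2 * m * E2) by ring.
rewrite ler_wpM2r //; first by rewrite !mulr_ge0 ?exprn_ge0 // ltW.
lra.
Qed.

End P4.

Unset Implicit Arguments.
Theorem lemma9 (R : realType) (d N : nat) (phi : 'I_N -> 'cV[R]_d)
  (thstar : 'cV[R]_d) (lam : R)
  (hphi : exists i, phi i != 0)
  (hlam_pos : 0 < lam)
  (hlam_eig : eigenvalue (gram phi) lam)
  (hlam_min : forall a : R, 0 < a -> eigenvalue (gram phi) a -> lam <= a) :
  forall th : 'cV[R]_d,
    norm2 (gradv (lossL phi thstar) th) >=
      8 * minpi phi th * Num.min (minpi phi th) (minpi phi thstar)
        * Num.sqrt lam
        * Num.sqrt (N%:R^-1 * \sum_(i < N) (sigpi phi th i - sigpi phi thstar i) ^+ 2).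
Proof.
move=> th.
have [i0 _] := hphi.
have N0 : (0 < N)%N by move: i0; case: (N) => [|n] [].
have Ni0 : 0 < (N%:R : R)^-1 by rewrite invr_gt0 ltr0n.
pose p i := sigpi phi th i; pose q i := sigpi phi thstar i.
pose a i := dotv (phi i) th - dotv (phi i) thstar.
have u0 : 0 <= minpi phi th := minpi_ge0 phi th.
have v0 : 0 <= minpi phi thstar := minpi_ge0 phi thstar.
set u := minpi phi th; set v := minpi phi thstar.
have m0 : 0 <= Num.min u v by rewrite le_min u0 v0.
have mu : Num.min u v <= u by rewrite ge_min lexx.
have w14 i : p i * (1 - p i) <= 1/4.
  have := sqr_ge0 (p i - 1/2); rewrite expr2 => h.
  have -> : p i * (1 - p i) = 1/4 - (p i - 1/2) * (p i - 1/2) by field.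
  by rewrite lerBlDr lerDl.
have m14 : Num.min u v <= 1/4.
  by apply: le_trans mu _; apply: le_trans (w14 i0); exact: minpi_le.
have ea i : Num.min u v * a i ^+ 2 <= (p i - q i) * a i /\
            4 * (p i - q i) ^+ 2 <= (p i - q i) * a i.
  have [c [c1 [c2 c3]]] := sig_mvt (dotv (phi i) th) (dotv (phi i) thstar).
  have mc : Num.min u v <= c.
    apply: le_trans c1; rewrite le_min; apply/andP; split; rewrite ge_min.
      by apply/orP; left; exact: minpi_le.
    by apply/orP; right; exact: minpi_le.
  rewrite /p /q /sigpi c3 -/(a i).
  have c0 : 0 <= c := le_trans m0 mc.
  split.
    by rewrite -mulrA -expr2 ler_wpM2r // sqr_ge0.
  have -> : 4 * (c * a i) ^+ 2 = (4 * c) * (c * a i ^+ 2) by ring.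
  have -> : c * a i * a i = 1 * (c * a i ^+ 2) by ring.
  by apply: ler_wpM2r; [rewrite mulr_ge0 // sqr_ge0 | lra].
set g := gradv (lossL phi thstar) th.
have gE : g = \sum_i (N%:R^-1 * (2 * (p i - q i) * (p i * (1 - p i)))) *: phi i.
  apply/matrixP => j k; rewrite ord1 grad_entry summxE mulr_sumr.
  by apply: eq_bigr => i _; rewrite mxE /p /q; ring.
have gsub : (g^T <= gram phi)%MS.
  rewrite gE linear_sum; apply/summx_sub => i _; rewrite linearZ.
  exact/scalemx_sub/row_in_gram.
have [W gW] := submxP gsub.
have aE i : a i = ((phi i)^T *m (th - thstar)) 0 0.
  by rewrite /a /dotv mulmxBr !mxE.
pose S := (g^T *m (th - thstar)) 0 0.
pose T := \sum_i (p i - q i) * a i.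
pose A2 := \sum_i a i ^+ 2.
pose PP := \sum_i (W *m phi i) 0 0 ^+ 2.
pose PA := \sum_i (W *m phi i) 0 0 * a i.
pose WGW := (W *m gram phi *m W^T) 0 0.
pose GG := \sum_j g j 0 ^+ 2.
have SE1 : S = \sum_i N%:R^-1 * (2 * (p i - q i) * (p i * (1 - p i))) * a i.
  rewrite /S gE linear_sum mulmx_suml summxE; apply: eq_bigr => i _.
  by rewrite linearZ -scalemxAl mxE aE.
have SE2 : S = N%:R^-1 * PA.
  rewrite /S gW quad_gram; congr (_ * _); apply: eq_bigr => i _; by rewrite aE.
have WE : WGW = N%:R^-1 * PP.
  rewrite /WGW quad_gram; congr (_ * _); apply: eq_bigr => i _.
  by rewrite -trmx_mul [in X in _ * X]mxE expr2.
have spec : lam * WGW <= GG.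
  have := spec_ineq (gram_sym phi) hlam_pos hlam_min W.
  suff -> : (W *m gram phi *m gram phi *m W^T) 0 0 = GG by [].
  have gT : g = gram phi *m W^T by rewrite -[g]trmxK gW trmx_mul gram_sym.
  rewrite -mulmxA -gT -gW mxE; apply: eq_bigr => j _; by rewrite mxE expr2.
pose E2 := \sum_i (p i - q i) ^+ 2.
have ST : 2 * N%:R^-1 * u * T <= S.
  rewrite SE1 /T mulr_sumr; apply: ler_sum => i _.
  have eai : 0 <= (p i - q i) * a i.
    by apply: le_trans (proj1 (ea i)); rewrite mulr_ge0 // sqr_ge0.
  have -> : N%:R^-1 * (2 * (p i - q i) * (p i * (1 - p i))) * a i =
     2 * N%:R^-1 * (p i * (1 - p i)) * ((p i - q i) * a i) by ring.
  rewrite ler_wpM2r // ler_wpM2l ?minpi_le //.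
have mT : Num.min u v * A2 <= T.
  by rewrite /A2 mulr_sumr; apply: ler_sum => i _; exact: (proj1 (ea i)).
have eT : 4 * E2 <= T.
  by rewrite /E2 mulr_sumr; apply: ler_sum => i _; exact: (proj2 (ea i)).
have A20 : 0 <= A2 by apply: sumr_ge0 => i _; exact: sqr_ge0.
have E20 : 0 <= E2 by apply: sumr_ge0 => i _; exact: sqr_ge0.
have PP0 : 0 <= PP by apply: sumr_ge0 => i _; exact: sqr_ge0.
have CS1 : PA ^+ 2 <= PP * A2 by apply: CS.
have CS2 : T ^+ 2 <= E2 * A2 by apply: CS.
have -> : norm2 g = Num.sqrt GG by [].
exact: (final_arith Ni0 hlam_pos u0 m0 m14 SE2 CS1 PP0 WE spec ST mT eT A20 E20 CS2).
Qed.
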